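(* Let $\ell\geq k$ be positive integers, let $\lambda\in\mathcal{P}_{\rm sq}^k$ and let $\mu\in\mathcal{P}^\ell$. Then $\mu\in\mathcal{P}^\ell(\lambda)$ if and only if there exists $b\in[\ell-k+1]$ such that: (i) $\mu(b)=b+k-1$ and $\mu(b+k-1)=b$; (ii) if $1\leq i<b$ then $\mu(\mu(i))>i$; (iii) if $b+k-1<i\leq \ell$ then $\mu(\mu(i))<i$; (iv) if $\tilde\lambda\in\mathcal{P}_{\rm sq}^k$ is defined by $\tilde\lambda(i)=\mu(b+i-1)-b+1$ for $1\leq i\leq k$, then $\tilde\lambda\in\{\lambda,\tau_k(\lambda)\}$.
   Context: For a positive integer $n$, $[n]=\{1,\dots,n\}$. A partition with $n$ parts is a sequence $\lambda=(\lambda_1,\dots,\lambda_n)$ of positive integers with $\lambda_1\geq\dots\geq\lambda_n>0$. For $n,k\in\mathbb{Z}^+$, $\mathcal{P}^{n,k}$ is the set of partitions with exactly $n$ parts and $\lambda_1\leq k$; such $\lambda$ is regarded as a weakly decreasing function $[n]\to[k]$, $\lambda(i)=\lambda_i$. Set $\mathcal{P}^k=\mathcal{P}^{k,k}$ (so elements of $\mathcal{P}^k$ are decreasing maps $[k]\to[k]$ and can be composed with themselves). The map $\tau_k:\mathcal{P}^{n,k}\to\mathcal{P}^{n,k}$ is $\tau_k(\lambda_1,\dots,\lambda_n)=(k+1-\lambda_n,\dots,k+1-\lambda_1)$. Let $\mathcal{P}_{\rm sq}^k=\{\lambda\in\mathcal{P}^k:\lambda_1=k,\ \lambda_k=1\}$.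 For $\lambda\in\mathcal{P}^k$ and $\ell\geq k$, define subsets $\mathcal{P}^\ell(\lambda)\subseteq\mathcal{P}^\ell$ inductively: $\mathcal{P}^k(\lambda)=\{\lambda,\tau_k(\lambda)\}$, and for $\ell>k$, $\mathcal{P}^\ell(\lambda)=\mathcal{P}^\ell_{\rm d}(\lambda)\cup\tau_\ell(\mathcal{P}^\ell_{\rm d}(\lambda))$ where $\mathcal{P}^\ell_{\rm d}(\lambda)=\{\mu\in\mathcal{P}^\ell:(\mu_1,\dots,\mu_{\ell-1})\in\mathcal{P}^{\ell-1}(\lambda)\}$. *)

(* Defs.v *)
From mathcomp Require Import all_boot.
Set Implicit Arguments. Unset Strict Implicit. Unset Printing Implicit Defensive.

(* A partition with n parts and largest part <= k, i.e. an element of P^{n,k},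
   is represented as the sequence [:: lam_1; ...; lam_n] of nats. *)
Definition is_part (n k : nat) (l : seq nat) : bool :=
  [&& size l == n, sorted geq l & all (fun x => 0 < x <= k) l].

(* 1-indexed evaluation: ev l i = lam(i) = lam_i for 1 <= i <= size l. *)
Definition ev (l : seq nat) (i : nat) : nat := nth 0 l i.-1.

Definition tau (k : nat) (l : seq nat) : seq nat := rev (map (fun x => k.+1 - x) l).

Definition P_sq (k : nat) (l : seq nat) : bool :=
  [&& is_part k k l, ev l 1 == k & ev l k == 1].

(* Pset k lam d = P^{k+d}(lam), defined by the paper's induction on ell = k + d. *)
Fixpoint Pset (k : nat) (lam : seq nat) (d : nat) : seq nat -> Prop :=
  match d with
  | 0 => fun mu => mu = lam \/ mu = tau k lam
  | d'.+1 =>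
      let Pd := fun nu => is_part (k + d) (k + d) nu /\ Pset k lam d' (take (k + d') nu) in
      fun mu => Pd mu \/ exists nu, Pd nu /\ mu = tau (k + d) nu
  end.

Definition Pell (k : nat) (lam : seq nat) (ell : nat) (mu : seq nat) : Prop :=
  k <= ell /\ Pset k lam (ell - k) mu.

(* Main.v *)
Require Import Defs.
From mathcomp Require Import all_boot.
From mathcomp Require Import zify.
Set Implicit Arguments. Unset Strict Implicit.

Lemma is_partP n k l : is_part n k l <->
  [/\ size l = n, (forall i j, 1 <= i <= j -> j <= n -> ev l j <= ev l i) &
      (forall i, 1 <= i <= n -> 0 < ev l i <= k)].
Proof.
rewrite /is_part /ev; split.
- case/and3P=> /eqP Hs Hso /(all_nthP 0) Ha; split => //.
  + move=> i j /andP[H1 H2] H3.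
    have := @sorted_leq_nth _ geq _ _ 0 l Hso (i.-1) (j.-1).
    rewrite !inE Hs. move=> H; apply: H.
    * move=> a b c; rewrite /geq /=; lia.
    * move=> a; rewrite /geq /=; lia.
    * lia. * lia. * lia.
  + move=> i /andP[H1 H2]; apply: Ha; lia.
- case=> Hs Hm Hb; apply/and3P; split; first by apply/eqP.
  + apply/(sortedP 0) => i Hi.
    have := Hm i.+1 i.+2; rewrite /=; apply; lia.
  + apply/(all_nthP 0) => i Hi. have := Hb i.+1; rewrite /=; apply; lia.
Qed.

Lemma nth_tau k l j : j < size l -> nth 0 (tau k l) j = k.+1 - nth 0 l (size l - j.+1).
Proof.
move=> Hj; rewrite /tau nth_rev size_map // (nth_map 0) //; lia.
Qed.

Lemma ev_tau n k l i : size l = n -> 1 <= i <= n ->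
  ev (tau k l) i = k.+1 - ev l (n.+1 - i).
Proof.
move=> Hs Hi; rewrite /ev nth_tau; last lia.
rewrite Hs; do 2 f_equal; lia.
Qed.

Lemma size_tau k l : size (tau k l) = size l.
Proof. by rewrite /tau size_rev size_map. Qed.

Lemma tau_part n k l : is_part n k l -> is_part n k (tau k l).
Proof.
case/is_partP=> Hs Hm Hb; apply/is_partP; split.
- by rewrite size_tau.
- move=> i j Hij Hj. rewrite !(ev_tau k Hs); try lia.
  have := Hm (n.+1 - j) (n.+1 - i); have := Hb (n.+1 - j); have := Hb (n.+1-i). lia.
- move=> i Hi; rewrite (ev_tau k Hs) //. have := Hb (n.+1 - i). lia.
Qed.

Lemma tauK n k l : is_part n k l -> tau k (tau k l) = l.
Proof.
move=> Hp; have [Hs _ Hb] := proj1 (is_partP _ _ _) Hp.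
apply: (eq_from_nth (x0 := 0)); first by rewrite !size_tau.
move=> i; rewrite !size_tau => Hi.
rewrite nth_tau ?size_tau // nth_tau ?size_tau; last lia.
have := Hb i.+1; rewrite /ev /=.
have -> : size l - (size l - i.+1).+1 = i by lia.
lia.
Qed.

Lemma ev_take m l i : 1 <= i <= m -> ev (take m l) i = ev l i.
Proof. move=> Hi; rewrite /ev nth_take //; lia. Qed.

Lemma take_part n l : is_part n.+1 n.+1 l -> ev l 1 <= n -> is_part n n (take n l).
Proof.
case/is_partP=> Hs Hm Hb H1; apply/is_partP; split.
- rewrite size_takel // Hs; lia.
- move=> i j Hij Hj; rewrite !ev_take; try lia. apply: Hm; lia.
- move=> i Hi; rewrite ev_take //. have := Hb i; have := Hm 1 i. lia.
Qed.

Definition Cond k ell (lam mu : seq nat) :=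
   exists b : nat,
     [/\ 1 <= b <= ell - k + 1,
         ev mu b = b + k - 1 /\ ev mu (b + k - 1) = b,
         (forall i, 1 <= i < b -> ev mu (ev mu i) > i),
         (forall i, b + k - 1 < i <= ell -> ev mu (ev mu i) < i) &
         (let lt := mkseq (fun j => ev mu (b + j) - b + 1) k in
          lt = lam \/ lt = tau k lam)].

Lemma Cond_tau k ell lam mu : 0 < k -> k <= ell -> is_part k k lam -> is_part ell ell mu ->
  Cond k ell lam mu -> Cond k ell lam (tau ell mu).
Proof.
move=> Hk Hkl Hlam Hmu [b [Hb [E1 E2] H2 H3 H4]].
have [Hs Hm Hbd] := proj1 (is_partP _ _ _) Hmu.
have eT : forall i, 1 <= i <= ell -> ev (tau ell mu) i = ell.+1 - ev mu (ell.+1 - i).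
  by move=> i; apply: ev_tau.
have eTT : forall i, 1 <= i <= ell ->
    ev (tau ell mu) (ev (tau ell mu) i) = ell.+1 - ev mu (ev mu (ell.+1 - i)).
  move=> i Hi; rewrite (eT i Hi).
  have Hx := Hbd (ell.+1 - i) ltac:(lia).
  rewrite eT; last lia. congr (_ - ev mu _); lia.
exists (ell.+2 - k - b); split.
- lia.
- split.
  + rewrite eT; last lia. have -> : ell.+1 - (ell.+2 - k - b) = b + k - 1 by lia.
    rewrite E2; lia.
  + rewrite eT; last lia. have -> : ell.+1 - (ell.+2 - k - b + k - 1) = b by lia.
    rewrite E1; lia.
- move=> i Hi. rewrite eTT; last lia. have := H3 (ell.+1 - i) ltac:(lia). lia.
- move=> i Hi. rewrite eTT; last lia. have := H2 (ell.+1 - i) ltac:(lia).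
  have h1 := Hbd (ell.+1 - i) ltac:(lia).
  have h2 := Hbd (ev mu (ell.+1 - i)) ltac:(lia). lia.
- have key : mkseq (fun j => ev (tau ell mu) (ell.+2 - k - b + j) - (ell.+2 - k - b) + 1) k
             = tau k (mkseq (fun j => ev mu (b + j) - b + 1) k).
    apply: (eq_from_nth (x0 := 0)); first by rewrite size_tau !size_mkseq.
    rewrite size_mkseq => j Hj.
    rewrite nth_tau ?size_mkseq // nth_mkseq // nth_mkseq; last lia.
    rewrite eT; last lia.
    have -> : ell.+1 - (ell.+2 - k - b + j) = b + (k - j.+1) by lia.
    have := Hm (b + (k - j.+1)) (b + k - 1) ltac:(lia) ltac:(lia).
    have := Hm b (b + (k - j.+1)) ltac:(lia) ltac:(lia).
    have := Hbd (b + (k - j.+1)) ltac:(lia). lia.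
  move: H4 => /=; rewrite key; case=> ->; [right | left] => //.
  exact: tauK Hlam.
Qed.

Lemma Cond_take k m lam mu : 0 < k -> k <= m -> is_part m.+1 m.+1 mu -> ev mu 1 <= m ->
  Cond k m.+1 lam mu -> Cond k m lam (take m mu).
Proof.
move=> Hk Hkm Hmu H1 [b [Hb [E1 E2] H2 H3 H4]].
have [Hs Hm Hbd] := proj1 (is_partP _ _ _) Hmu.
have Hbk : b + k - 1 <= m by have := Hm 1 b ltac:(lia) ltac:(lia); lia.
have eTT : forall i, 1 <= i <= m -> ev (take m mu) (ev (take m mu) i) = ev mu (ev mu i).
  move=> i Hi; rewrite (ev_take _ (i := i)) //.
  have := Hbd i ltac:(lia); have := Hm 1 i ltac:(lia) ltac:(lia) => ??.
  rewrite ev_take //; lia.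
exists b; split.
- lia.
- rewrite !ev_take; lia.
- move=> i Hi; rewrite eTT; last lia. apply: H2; lia.
- move=> i Hi; rewrite eTT; last lia. apply: H3; lia.
- have -> : mkseq (fun j => ev (take m mu) (b + j) - b + 1) k =
            mkseq (fun j => ev mu (b + j) - b + 1) k.
    apply: (eq_from_nth (x0 := 0)); first by rewrite !size_mkseq.
    rewrite size_mkseq => j Hj; rewrite !nth_mkseq // ev_take //; lia.
  exact: H4.
Qed.

Lemma Cond_ext k m lam mu : 0 < k -> k <= m -> is_part m.+1 m.+1 mu ->
  is_part m m (take m mu) -> Cond k m lam (take m mu) -> Cond k m.+1 lam mu.
Proof.
move=> Hk Hkm Hmu Ht [b [Hb [E1 E2] H2 H3 H4]].
have [Hs Hm Hbd] := proj1 (is_partP _ _ _) Hmu.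
have [_ _ Hbt] := proj1 (is_partP _ _ _) Ht.
rewrite !ev_take in E1 E2; try lia.
have eTT : forall i, 1 <= i <= m -> ev (take m mu) (ev (take m mu) i) = ev mu (ev mu i).
  move=> i Hi; have := Hbt i Hi; rewrite (ev_take _ (i := i)) // => ?.
  rewrite ev_take //; lia.
exists b; split.
- lia.
- lia.
- move=> i Hi; rewrite -eTT; last lia. apply: H2; lia.
- move=> i /andP[Hi1 Hi2]. have [Hi|Hi] : i <= m \/ i = m.+1 by lia.
  + rewrite -eTT; last lia. apply: H3; lia.
  + subst i. have := Hbt 1 ltac:(lia); rewrite ev_take; last lia. move=> ?.
    have := Hbd m.+1 ltac:(lia) => ?.
    have := Hm 1 (ev mu m.+1) ltac:(lia) ltac:(lia). lia.
- have <- : mkseq (fun j => ev (take m mu) (b + j) - b + 1) k =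
            mkseq (fun j => ev mu (b + j) - b + 1) k.
    apply: (eq_from_nth (x0 := 0)); first by rewrite !size_mkseq.
    rewrite size_mkseq => j Hj; rewrite !nth_mkseq // ev_take //; lia.
  exact: H4.
Qed.

Lemma mkseq_id n mu : is_part n n mu -> mkseq (fun j => ev mu (1 + j) - 1 + 1) n = mu.
Proof.
case/is_partP=> Hs _ Hbd.
apply: (eq_from_nth (x0 := 0)); first by rewrite size_mkseq.
rewrite size_mkseq => j Hj; rewrite nth_mkseq //.
have := Hbd (1 + j) ltac:(lia); rewrite /ev add1n /=. lia.
Qed.

Lemma Pset_part k lam d mu : is_part k k lam -> Pset k lam d mu -> is_part (k + d) (k + d) mu.
Proof.
move=> Hl; elim: d mu => [|d IH] mu /=.
- rewrite addn0; case=> ->; [done | exact: tau_part].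
- case=> [[Hp _]|[nu [[Hp _] ->]]] //; exact: tau_part.
Qed.

Lemma main k lam d : 0 < k -> P_sq k lam -> forall mu, is_part (k + d) (k + d) mu ->
  (Pset k lam d mu <-> Cond k (k + d) lam mu).
Proof.
move=> Hk /and3P[Hl /eqP L1 /eqP Lk].
elim: d => [|d IH] mu Hmu.
- rewrite addn0 in Hmu *; simpl Pset; split.
  + have base : forall nu, is_part k k nu -> ev nu 1 = k -> ev nu k = 1 ->
        (nu = lam \/ nu = tau k lam) -> Cond k k lam nu.
      move=> nu Hnu N1 Nk Hor; exists 1; split.
      * lia.
      * have -> : 1 + k - 1 = k by lia. by rewrite N1 Nk.
      * lia.
      * lia.
      * by rewrite /= mkseq_id.
    have [Hs _ _] := proj1 (is_partP _ _ _) Hl.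
    case=> ->.
    * apply: base; [done | lia | lia | by left].
    * apply: base.
      -- exact: tau_part.
      -- rewrite (ev_tau k Hs); last lia. have -> : k.+1 - 1 = k by lia. lia.
      -- rewrite (ev_tau k Hs); last lia. have -> : k.+1 - k = 1 by lia. lia.
      -- by right.
  + case=> b [Hb _ _ _ H4].
    have Eb : b = 1 by lia. subst b.
    by move: H4; rewrite /= mkseq_id.
- simpl Pset. rewrite !addnS in Hmu *.
  have Hkm : k <= k + d by lia.
  have left_ : forall nu, is_part (k + d).+1 (k + d).+1 nu -> ev nu 1 <= k + d ->
      Cond k (k + d).+1 lam nu ->
      is_part (k + d).+1 (k + d).+1 nu /\ Pset k lam d (take (k + d) nu).
    move=> nu Hnu N1 Hc; split => //.
    apply/IH; first exact: take_part.
    exact: Cond_take.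
  split.
  + case=> [[Hp Ht]|[nu [[Hp Ht] ->]]].
    * apply: Cond_ext => //; first exact: (Pset_part Hl Ht).
      apply/IH => //; exact: (Pset_part Hl Ht).
    * apply: Cond_tau => //; first lia.
      apply: Cond_ext => //; first exact: (Pset_part Hl Ht).
      apply/IH => //; exact: (Pset_part Hl Ht).
  + move=> Hc.
    have [Hs Hm Hbd] := proj1 (is_partP _ _ _) Hmu.
    have [H1|H1] : ev mu 1 <= k + d \/ ev mu 1 = (k + d).+1.
      have := Hbd 1 ltac:(lia); lia.
    * left; exact: left_.
    * right. have Hl2 : 2 <= ev mu (k + d).+1.
        case: (Hc) => b [Hb [E1 E2] H2 _ _].
        have Hb1 : b <> 1 by move=> Eb; subst b; lia.
        have := H2 1 ltac:(lia). by rewrite H1.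
      exists (tau (k + d).+1 mu); split; last by rewrite (tauK Hmu).
      apply: left_.
      -- exact: tau_part.
      -- rewrite (ev_tau _ Hs); last lia. have -> : (k + d).+2 - 1 = (k + d).+1 by lia. lia.
      -- apply: Cond_tau => //; lia.
Qed.

Theorem theorem3p1 (k ell : nat) (lam mu : seq nat) :
  0 < k -> k <= ell -> P_sq k lam -> is_part ell ell mu ->
  (Pell k lam ell mu <->
   exists b : nat,
     [/\ 1 <= b <= ell - k + 1,
         ev mu b = b + k - 1 /\ ev mu (b + k - 1) = b,
         (forall i, 1 <= i < b -> ev mu (ev mu i) > i),
         (forall i, b + k - 1 < i <= ell -> ev mu (ev mu i) < i) &
         (let lt := mkseq (fun j => ev mu (b + j) - b + 1) k in
          lt = lam \/ lt = tau k lam)]).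
Proof.
move=> Hk Hkl Hl Hmu.
have Hm : is_part (k + (ell - k)) (k + (ell - k)) mu by rewrite subnKC.
have := @main k lam (ell - k) Hk Hl mu Hm; rewrite subnKC // => H.
rewrite /Pell -/(Cond k ell lam mu); split.
- by case=> _ /H.
- by move=> /H.
Qed.
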